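(* For nonnegative integers $p,q$, $G_2(p,q)=\binom{p+q+1}{q}\zeta(p+q+2)$, and if moreover $q\ge1$, then also $G_2(p,q)=G_2(q-1,p+1)$.
   Context: $\zeta(s)$ is the Riemann zeta function. For nonnegative integers $n,p,q$, $$G_{n+2}(p,q)=\sum_{1\le k_1<\cdots<k_{p+1}}\frac{1}{k_1\cdots k_p\,k_{p+1}^{n+2}}\sum_{1\le \ell_1\le\cdots\le\ell_q\le k_{p+1}}\frac{1}{\ell_1\cdots\ell_q}.$$ *)

(* Defs.v *)
From HB Require Import structures.
From mathcomp Require Import all_boot all_order all_algebra.
From mathcomp Require Import all_classical all_reals all_analysis.
Set Implicit Arguments. Unset Strict Implicit. Unset Printing Implicit Defensive.
Import Order.TTheory GRing.Theory Num.Theory.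
Import numFieldNormedType.Exports.
Local Open Scope ring_scope.

(* Estr p m = sum over 1 <= k_1 < ... < k_p <= m of 1/(k_1 ... k_p)
   (nested sum unfolded on the largest index k_p = j). *)
Fixpoint Estr (R : realType) (p m : nat) : R :=
  match p with
  | 0 => 1
  | p'.+1 => \sum_(1 <= j < m.+1) Estr R p' j.-1 / j%:R
  end.

(* Hweak q m = sum over 1 <= l_1 <= ... <= l_q <= m of 1/(l_1 ... l_q)
   (nested sum unfolded on the largest index l_q = l). *)
Fixpoint Hweak (R : realType) (q m : nat) : R :=
  match q with
  | 0 => 1
  | q'.+1 => \sum_(1 <= l < m.+1) Hweak R q' l / l%:R
  end.

(* term of G_{n+2}(p,q) with outer index k = k_{p+1} >= 1 *)
Definition Gterm (R : realType) (n p q k : nat) : R :=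
  Estr R p k.-1 * Hweak R q k / (k%:R ^+ (n + 2)).

Definition Gpartial (R : realType) (n p q N : nat) : R :=
  \sum_(1 <= k < N) Gterm R n p q k.

Definition G (R : realType) (n p q : nat) : R := limn (Gpartial R n p q).

Definition zeta (R : realType) (s : nat) : R :=
  limn (fun N => \sum_(1 <= k < N) 1 / ((k%:R : R) ^+ s)).

(* Main.v *)
Require Import Defs.
From HB Require Import structures.
From mathcomp Require Import all_boot all_order all_algebra.
From mathcomp Require Import all_classical all_reals all_analysis.
From mathcomp Require Import ring lra zify.
Import Order.TTheory GRing.Theory Num.Theory.
Import numFieldNormedType.Exports.
Local Open Scope ring_scope.

Section PS.
Variables (R : realType) (Q : nat).
Let n := Q.+2.
Let h : {poly R} := 'X^n.
Definition A := {poly %/ h}.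
Definition cst (r : R) : A := qpolyC h r.
Definition yy : A := 'qX.
Definition kc (i : nat) (a : A) : R := (a : {poly R})`_i.

Lemma mkh : mk_monic h = h.
Proof. by rewrite /h mk_monic_Xn. Qed.

Lemma szh : size (mk_monic h) = n.+1.
Proof. by rewrite mkh /h size_polyXn. Qed.

Lemma valM (a b : A) : ((a * b : A) : {poly R}) = take_poly n ((a : {poly R}) * b).
Proof. by rewrite poly_of_qpolyM [X in Pdiv.CommonRing.rmodp _ X]mkh Pdiv.RingMonic.take_poly_rmodp. Qed.

Lemma kcM i (a b : A) : (i < n)%N ->
  kc i (a * b) = \sum_(j < i.+1) kc j a * kc (i - j) b.
Proof. by move=> hi; rewrite /kc valM coef_take_poly hi coefM. Qed.

Lemma kcD i (a b : A) : kc i (a + b) = kc i a + kc i b.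
Proof. by rewrite /kc poly_of_qpolyD coefD. Qed.

Lemma kcN i (a : A) : kc i (- a) = - kc i a.
Proof. by rewrite /kc /= coefN. Qed.

Lemma kcB i (a b : A) : kc i (a - b) = kc i a - kc i b.
Proof. by rewrite kcD kcN. Qed.

Lemma kc_sum i I (r : seq I) (P : pred I) (F : I -> A) :
  kc i (\sum_(j <- r | P j) F j) = \sum_(j <- r | P j) kc i (F j).
Proof. by rewrite /kc poly_of_qpoly_sum coef_sum. Qed.

Lemma kc_cst i r : kc i (cst r) = if i == 0%N then r else 0.
Proof. by rewrite /kc /cst qpolyCE coefC. Qed.

Lemma kc1 i : kc i 1 = (i == 0%N)%:R.
Proof. by rewrite -(rmorph1 (qpolyC h)) -/(cst 1) kc_cst; case: (i == 0%N). Qed.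

Lemma kc_cstM i r (a : A) : kc i (cst r * a) = r * kc i a.
Proof.
rewrite /kc valM qpolyCE coef_take_poly mul_polyC coefZ.
case: ltnP => // hi; suff -> : (a : {poly R})`_i = 0 by rewrite mulr0.
apply: nth_default; have H : (size (a : {poly R}) < n.+1)%N by rewrite -szh size_mk_monic.
by rewrite ltnS in H; exact: leq_trans H hi.
Qed.

Lemma yyE : (yy : {poly R}) = 'X.
Proof. by rewrite /yy qpolyXE // /h ?size_polyXn ?monicXn. Qed.

Lemma kc_yM i (a : A) : (i.+1 < n)%N -> kc i.+1 (yy * a) = kc i a.
Proof. by move=> hi; rewrite /kc valM coef_take_poly hi yyE coefXM. Qed.

Lemma kc_yM0 (a : A) : kc 0 (yy * a) = 0.
Proof. by rewrite /kc valM coef_take_poly yyE coefXM. Qed.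


Lemma kc_big i (a : A) : (n <= i)%N -> kc i a = 0.
Proof.
move=> hi; apply: nth_default.
have H : (size (a : {poly R}) < n.+1)%N by rewrite -szh size_mk_monic.
by rewrite ltnS in H; exact: leq_trans H hi.
Qed.

Lemma kc_inj (a b : A) : (forall i, kc i a = kc i b) -> a = b.
Proof. by move=> H; apply: val_inj; apply/polyP => i; apply: H. Qed.

Definition gpol (r : R) : {poly R} := \poly_(i < n) (r^-1) ^+ i.+1.
Definition iv (r : R) : A := in_qpoly h (gpol r).

Lemma kc_iv i r : kc i (iv r) = if (i < n)%N then (r^-1) ^+ i.+1 else 0.
Proof.
rewrite /kc /iv in_qpoly_small ?coef_poly // szh ltnS.
exact: size_poly.
Qed.

Lemma ivK r : r != 0 -> (cst r - yy) * iv r = 1.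
Proof.
move=> r0; apply: kc_inj => i.
case: (ltnP i n) => hi; last by rewrite !kc_big.
rewrite mulrBl kcB kc_cstM kc1 kc_iv hi.
case: i hi => [|i] hi.
  by rewrite kc_yM0 subr0 expr1 mulfV.
rewrite kc_yM // kc_iv (ltn_trans _ hi) // exprS mulrA mulfV // mul1r subrr.
by [].
Qed.


Definition nn (a : A) := forall i, 0 <= kc i a.
Definition lep (a b : A) := nn (b - a).

Lemma nnM a b : nn a -> nn b -> nn (a * b).
Proof.
move=> ha hb i; case: (ltnP i n) => hi; last by rewrite kc_big.
rewrite kcM //; apply: sumr_ge0 => j _; exact: mulr_ge0.
Qed.

Lemma nnD a b : nn a -> nn b -> nn (a + b).
Proof. by move=> ha hb i; rewrite kcD; apply: addr_ge0. Qed.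

Lemma nn_cst r : 0 <= r -> nn (cst r).
Proof. by move=> hr i; rewrite kc_cst; case: (i == 0%N). Qed.

Lemma nn1 : nn 1.
Proof. by move=> i; rewrite kc1 ler0n. Qed.

Lemma nn_iv r : 0 <= r -> nn (iv r).
Proof.
move=> hr i; rewrite kc_iv; case: (i < n)%N => //.
by apply: exprn_ge0; rewrite invr_ge0.
Qed.

Lemma nn_prod k (F : 'I_k -> A) : (forall j, nn (F j)) -> nn (\prod_(j < k) F j).
Proof.
move=> H; elim/big_ind: _ => //; [exact: nn1 | exact: nnM].
Qed.

Lemma nn_sum k (F : 'I_k -> A) : (forall j, nn (F j)) -> nn (\sum_(j < k) F j).
Proof.
move=> H; elim/big_ind: _ => //; [ | exact: nnD].
by move=> i; rewrite /kc coef0.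
Qed.

Lemma nnX a k : nn a -> nn (a ^+ k).
Proof. by move=> ha; elim: k => [|k ih]; [exact: nn1 | rewrite exprS; exact: nnM]. Qed.

Lemma lep_kc a b i : lep a b -> kc i a <= kc i b.
Proof. by move=> H; have := H i; rewrite kcB subr_ge0. Qed.

Lemma lepM a a' b b' : nn a -> nn b -> lep a a' -> lep b b' -> lep (a * b) (a' * b').
Proof.
move=> ha hb h1 h2; rewrite /lep.
have -> : a' * b' - a * b = (a' - a) * (b + (b' - b)) + a * (b' - b) by ring.
apply: nnD; apply: nnM => //; exact: nnD.
Qed.

Lemma lep_refl a : lep a a.
Proof. by move=> i; rewrite subrr /kc coef0. Qed.

Lemma lep_prod k (F G : 'I_k -> A) : (forall j, nn (F j)) -> (forall j, lep (F j) (G j)) ->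
  lep (\prod_(j < k) F j) (\prod_(j < k) G j).
Proof.
elim: k F G => [|k ih] F G hF hG; first by rewrite !big_ord0; exact: lep_refl.
rewrite !big_ord_recr /=; apply: lepM => //; last by apply: ih.
exact: nn_prod.
Qed.

Lemma lepX a b k : nn a -> lep a b -> lep (a ^+ k) (b ^+ k).
Proof.
move=> ha hab; elim: k => [|k ih]; first exact: lep_refl.
rewrite !exprS; apply: lepM => //; exact: nnX.
Qed.

Lemma lep_iv r s : 0 < s -> s <= r -> lep (iv r) (iv s).
Proof.
move=> hs hsr i; rewrite kcB !kc_iv; case: (i < n)%N; last by rewrite subrr.
have hr : 0 < r by exact: lt_le_trans hsr.
rewrite subr_ge0; apply: lerXn2r; rewrite ?nnegrE ?invr_ge0 ?(ltW hs) ?(ltW hr) //.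
by rewrite lef_pV2 ?posrE.
Qed.

Lemma lep_iv1 r : 1 <= r -> lep (iv r) (cst r^-1 * iv 1).
Proof.
move=> hr i; rewrite kcB kc_cstM !kc_iv; case: (i < n)%N; last by rewrite mulr0 subrr.
rewrite invr1 expr1n mulr1 subr_ge0 exprS ler_piMr ?invr_ge0 ?(le_trans ler01) //.
by apply: exprn_ile1; rewrite ?invr_ge0 ?(le_trans ler01) // invf_le1 // (lt_le_trans ltr01).
Qed.


Lemma cstD r s : cst (r + s) = cst r + cst s.
Proof. exact: rmorphD. Qed.
Lemma cstM r s : cst (r * s) = cst r * cst s.
Proof. exact: rmorphM. Qed.
Lemma cst1 : cst 1 = 1.
Proof. exact: rmorph1. Qed.
Lemma cstV r : r != 0 -> cst r^-1 * cst r = 1.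
Proof. by move=> r0; rewrite -cstM mulVf // cst1. Qed.

Definition cn (m : nat) : A := cst m%:R - yy.
Lemma cnK m : (0 < m)%N -> cn m * iv m%:R = 1.
Proof. by move=> hm; apply: ivK; rewrite pnatr_eq0 -lt0n. Qed.

Definition P (m k : nat) : A := \prod_(j < k) iv (m + j)%:R.

Lemma P0 m : P m 0 = 1.
Proof. by rewrite /P big_ord0. Qed.

Lemma P_recr m k : P m k.+1 = P m k * iv (m + k)%:R.
Proof. by rewrite /P big_ord_recr. Qed.

Lemma P_recl m k : P m k.+1 = iv m%:R * P m.+1 k.
Proof.
rewrite /P big_ord_recl addn0; congr (_ * _); apply: eq_bigr => j _.
by rewrite /= addSnnS.
Qed.

Lemma P_shr m k : (0 < m)%N -> P m k = P m k.+1 * cn (m + k).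
Proof.
move=> hm; rewrite P_recr -mulrA [iv _ * _]mulrC cnK ?mulr1 //.
exact: leq_trans hm (leq_addr _ _).
Qed.

Lemma P_shl m k : (0 < m)%N -> P m.+1 k = P m k.+1 * cn m.
Proof. by move=> hm; rewrite P_recl mulrC mulrA cnK ?mul1r. Qed.

Lemma identA m k : (0 < m)%N -> P m k - P m.+1 k = cst k%:R * P m k.+1.
Proof.
move=> hm; rewrite {1}(P_shr m k hm) (P_shl m k hm) /cn natrD cstD; ring.
Qed.

Lemma teleA k M : \sum_(i < M) cst k%:R * P i.+1 k.+1 = P 1 k - P M.+1 k.
Proof.
elim: M => [|M ih]; first by rewrite big_ord0 subrr.
by rewrite big_ord_recr /= ih -identA //; ring.
Qed.

Definition fk (k : nat) : A := cst k`!%:R * P 1 k.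

Lemma fk_step k : fk k = fk k.+1 - yy * (cst k.+1%:R^-1 * fk k.+1).
Proof.
have k0 : (k.+1%:R : R) != 0 by rewrite pnatr_eq0.
have E : fk k.+1 - yy * (cst k.+1%:R^-1 * fk k.+1) =
  cst k.+1%:R^-1 * (cst k.+1%:R * fk k.+1 - yy * fk k.+1).
  by rewrite mulrBr [X in _ = X - _]mulrA cstV // mul1r; ring.
rewrite E /fk P_recr add1n -mulrBl factS natrM cstM.
have -> : (cst k.+1%:R - yy) = cn k.+1 by [].
have -> : cst k.+1%:R^-1 * (cn k.+1 * (cst k.+1%:R * cst k`!%:R * (P 1 k * iv k.+1%:R)))
   = (cst k.+1%:R^-1 * cst k.+1%:R) * cst k`!%:R * P 1 k * (cn k.+1 * iv k.+1%:R) by ring.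
by rewrite cstV // cnK // mul1r mulr1.
Qed.

Lemma fk_rec k : fk k = 1 + yy * \sum_(l < k) cst l.+1%:R^-1 * fk l.+1.
Proof.
elim: k => [|k ih]; first by rewrite big_ord0 mulr0 addr0 /fk P0 mulr1 cst1.
by rewrite big_ord_recr /= mulrDr addrA -ih (fk_step k) subrK.

Qed.


Lemma kc_fk s k : (s < n)%N -> kc s (fk k) = Hweak R s k.
Proof.
elim: s k => [|s ih] k hs.
  by rewrite fk_rec kcD kc1 kc_yM0 /= ; lra.
rewrite fk_rec kcD kc1 kc_yM // kc_sum /= add0r.
rewrite big_add1 /= big_mkord; apply: eq_bigr => l _.
by rewrite kc_cstM ih ?(ltn_trans _ hs) // mulrC.
Qed.

Lemma kc_P1 s k : (s < n)%N -> kc s (P 1 k) = Hweak R s k / k`!%:R.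
Proof.
move=> hs; rewrite -kc_fk // /fk kc_cstM [RHS]mulrC mulrA mulVf ?mul1r //.
Qed.

Lemma ivX_rel r j : r != 0 -> iv r ^+ j.+1 = (cst r - yy) * iv r ^+ j.+2.
Proof. by move=> r0; rewrite [iv r ^+ j.+2]exprS mulrA ivK // mul1r. Qed.

Lemma kc_ivX r j s : 0 < r -> (s < n)%N ->
  kc s (iv r ^+ j.+1) = 'C((j + s)%N, s)%:R / r ^+ (j + s)%N.+1.
Proof.
move=> r0; have r0' : r != 0 by rewrite gt_eqF.
elim: j s => [|j ihj] s hs.
  by rewrite expr1 kc_iv hs add0n binn div1r exprVn.
have key : forall t, (t < n)%N -> r * kc t (iv r ^+ j.+2) =
    kc t (iv r ^+ j.+1) + (if t is t'.+1 then kc t' (iv r ^+ j.+2) else 0).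
  move=> t ht; rewrite (ivX_rel r j r0') mulrBl kcB kc_cstM.
  case: t ht => [|t] ht; first by rewrite kc_yM0 subr0 addr0.
  by rewrite kc_yM // subrK.
elim: s hs => [|s ihs] hs.
  apply: (mulfI r0'); rewrite key // ihj // !addn0 !bin0 addr0.
  rewrite [r ^+ j.+2]exprS; field.
  by rewrite expf_neq0.
apply: (mulfI r0'); rewrite key // ihj // ihs ?(ltn_trans _ hs) //.
rewrite !addnS !addSn [in RHS]binS natrD [r ^+ (j + s).+3]exprS; field.
by rewrite expf_neq0.
Qed.


Lemma Estr_S0 i : Estr R i.+1 0 = 0.
Proof. by rewrite /= big_geq. Qed.

Lemma Estr_SS i K : Estr R i.+1 K.+1 = Estr R i.+1 K + Estr R i K / K.+1%:R.
Proof. by rewrite /= big_nat_recr. Qed.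

Definition Sm m p K := \sum_(i < p.+1) cst (Estr R i K) * iv m%:R ^+ (p - i).+1.
Definition Tm m p K := \sum_(i < p) cst (Estr R i K) * iv m%:R ^+ (p - i).
Definition rem m p K := cst K`!%:R * P m K.+1 * Sm m p K.
Definition Wm m p K := \sum_(j < K) cst (Estr R p j * j`!%:R) * P m j.+2.

Lemma cn_ivX m r : (0 < m)%N -> cn m * iv m%:R ^+ r.+1 = iv m%:R ^+ r.
Proof.
move=> hm; case: r => [|r]; first by rewrite expr1 cnK.
by rewrite (ivX_rel _ r) // pnatr_eq0 -lt0n.
Qed.

Lemma cS m p K : (0 < m)%N -> cn m * Sm m p K = Tm m p K + cst (Estr R p K).
Proof.
move=> hm; rewrite /Sm /Tm mulr_sumr big_ord_recr /= subnn.
rewrite mulrCA cn_ivX // expr0 mulr1; congr (_ + _); apply: eq_bigr => i _.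
by rewrite mulrCA cn_ivX.
Qed.

Lemma S_succ m p K : Sm m p K.+1 = Sm m p K + cst K.+1%:R^-1 * Tm m p K.
Proof.
rewrite /Sm /Tm !big_ord_recl mulr_sumr -addrA; congr (_ + _).
rewrite -big_split; apply: eq_bigr => i _.
rewrite lift0 Estr_SS cstD mulrDl; congr (_ + _).
by rewrite subnSK // cstM; ring.
Qed.

Lemma rem_step m p K : (0 < m)%N ->
  rem m p K = cst (Estr R p K * K`!%:R) * P m K.+2 + rem m p K.+1.
Proof.
move=> hm; rewrite /rem (P_shr m K.+1 hm) S_succ.
set a := P m K.+2.
have -> : cn (m + K.+1) = cn m + cst K.+1%:R by rewrite /cn natrD cstD; ring.
have hd : cst K.+1%:R^-1 * cst K.+1%:R = 1 by rewrite cstV // pnatr_eq0.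
rewrite factS natrM !cstM.
have -> : cst K`!%:R * (a * (cn m + cst K.+1%:R)) * Sm m p K =
  cst K`!%:R * a * (cn m * Sm m p K) + cst K`!%:R * a * (cst K.+1%:R * Sm m p K) by ring.
rewrite cS //.
have -> : cst K.+1%:R * cst K`!%:R * a * (Sm m p K + cst K.+1%:R^-1 * Tm m p K) =
  cst K`!%:R * a * (cst K.+1%:R * Sm m p K) +
  (cst K.+1%:R^-1 * cst K.+1%:R) * (cst K`!%:R * a * Tm m p K) by ring.
rewrite hd; ring.
Qed.

Lemma identB m p K : (0 < m)%N -> Wm m p K + rem m p K = iv m%:R ^+ p.+2.
Proof.
move=> hm; elim: K => [|K ih].
  rewrite /Wm big_ord0 add0r /rem fact0 cst1 mul1r /Sm big_ord_recl.
  rewrite big1 => [|i _]; last by rewrite lift0 Estr_S0 /cst qpolyC0 mul0r.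
  by rewrite addr0 /= cst1 mul1r subn0 P_recr P0 mul1r addn0 -exprS.
by rewrite -ih /Wm big_ord_recr /= (rem_step m p K hm) addrA.
Qed.


Lemma Estr_ge0 p K : 0 <= Estr R p K.
Proof.
elim: p K => [|p ih] K /=; first exact: ler01.
by apply: sumr_ge0 => j _; apply: divr_ge0.
Qed.

Lemma Hweak_ge0 q K : 0 <= Hweak R q K.
Proof.
elim: q K => [|q ih] K /=; first exact: ler01.
by apply: sumr_ge0 => j _; apply: divr_ge0.
Qed.

Lemma lep_trans a b c : lep a b -> lep b c -> lep a c.
Proof.
move=> h1 h2; rewrite /lep.
have -> : c - a = (c - b) + (b - a) by ring.
exact: nnD.
Qed.

Lemma lep_sum k (F G : 'I_k -> A) : (forall j, lep (F j) (G j)) ->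
  lep (\sum_(j < k) F j) (\sum_(j < k) G j).
Proof. by move=> H; rewrite /lep -sumrB; apply: nn_sum. Qed.

Lemma nnP m k : nn (P m k).
Proof. by apply: nn_prod => j; apply: nn_iv; rewrite ler0n. Qed.

Lemma nnS m p K : nn (Sm m p K).
Proof.
apply: nn_sum => i; apply: nnM; first by apply: nn_cst; exact: Estr_ge0.
by apply: nnX; apply: nn_iv; rewrite ler0n.
Qed.

Lemma nn_rem m p K : nn (rem m p K).
Proof. by apply: nnM; [apply: nnM; [apply: nn_cst; rewrite ler0n | apply: nnP] | apply: nnS]. Qed.

Lemma kc_rem_ge0 m p K : 0 <= kc Q (rem m p K).
Proof. exact: nn_rem. Qed.

Lemma kc_P_ge0 m k : 0 <= kc Q (P m k).
Proof. exact: nnP. Qed.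

Lemma FA p M j :
  \sum_(i < M) (Estr R p j * j`!%:R * kc Q (P i.+1 j.+2)) +
  Estr R p j * j`!%:R / j.+1%:R * kc Q (P M.+1 j.+1) = Gterm R 0 p Q j.+1.
Proof.
have hQ : (Q < n)%N by rewrite /n ltnS leqnSn.
have := congr1 (kc Q) (teleA j.+1 M).
rewrite kc_sum kcB kc_P1 //.
under eq_bigr do rewrite kc_cstM.
rewrite -mulr_sumr => hX.
rewrite -mulr_sumr /Gterm add0n /=.
set X := \sum_(i < M) _ in hX *.
set Y := kc Q (P M.+1 j.+1) in hX *.
have j0 : (j.+1%:R : R) != 0 by rewrite pnatr_eq0.
have f0 : (j`!%:R : R) != 0 by rewrite pnatr_eq0 -lt0n fact_gt0.
have -> : X = (Hweak R Q j.+1 / (j.+1)`!%:R - Y) / j.+1%:R.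
  by rewrite -hX [_ * X]mulrC mulfK.
rewrite factS natrM; field.
by rewrite f0 andbT addrC natr1 pnatr_eq0.
Qed.

Lemma FB p i K :
  \sum_(j < K) (Estr R p j * j`!%:R * kc Q (P i.+1 j.+2)) + kc Q (rem i.+1 p K) =
  'C((p + Q + 1)%N, Q)%:R / (i.+1%:R ^+ (p + Q + 2)%N).
Proof.
have hQ : (Q < n)%N by rewrite /n ltnS leqnSn.
have := congr1 (kc Q) (identB i.+1 p K (ltn0Sn i)).
rewrite kcD kc_ivX ?ltr0n // /Wm kc_sum.
under eq_bigr do rewrite kc_cstM.
move=> ->.
by rewrite addn1 addSn addn2.
Qed.


Lemma Fsig m p K : (0 < m)%N ->
  kc Q (rem m p K) <= K.+1%:R^-1 * \sum_(s < Q.+1) (Hweak R s K *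
     \sum_(a < p.+1) (Estr R a K * kc (Q - s) (iv 1%:R ^+ (p - a).+2))).
Proof.
move=> hm.
have hQ : (Q < n)%N by rewrite /n ltnS leqnSn.
have L1 : lep (P m K) (P 1 K).
  apply: lep_prod => [j|j]; first by apply: nn_iv; rewrite ler0n.
  by apply: lep_iv; rewrite ?ltr0n ?ler_nat ?leq_add2r // add1n.
have L2 : lep (iv (m + K)%:R) (cst K.+1%:R^-1 * iv 1).
  apply: (lep_trans _ (iv K.+1%:R)); last by apply: lep_iv1; rewrite ler1n.
  by apply: lep_iv; rewrite ?ltr0n // ler_nat -add1n leq_add2r.
have L3 : lep (Sm m p K) (Sm 1 p K).
  apply: lep_sum => a; apply: lepM; first by apply: nn_cst; exact: Estr_ge0.
  - by apply: nnX; apply: nn_iv; rewrite ler0n.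
  - exact: lep_refl.
  apply: lepX; first by apply: nn_iv; rewrite ler0n.
  by apply: lep_iv; rewrite ?ltr0n ?ler_nat.
have big : lep (rem m p K) (cst K`!%:R * (P 1 K * (cst K.+1%:R^-1 * iv 1)) * Sm 1 p K).
  rewrite /rem P_recr; apply: lepM => //.
  - apply: nnM; first by apply: nn_cst; rewrite ler0n.
    by apply: nnM; [apply: nnP | apply: nn_iv; rewrite ler0n].
  - exact: nnS.
  apply: lepM; first by apply: nn_cst; rewrite ler0n.
  - by apply: nnM; [apply: nnP | apply: nn_iv; rewrite ler0n].
  - exact: lep_refl.
  apply: lepM => //; [exact: nnP | by apply: nn_iv; rewrite ler0n].
apply: le_trans (lep_kc _ _ Q big) _.
have -> : cst K`!%:R * (P 1 K * (cst K.+1%:R^-1 * iv 1)) * Sm 1 p K =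
   cst K.+1%:R^-1 * (fk K * (iv 1 * Sm 1 p K)) by rewrite /fk; ring.
rewrite kc_cstM kcM //; apply: ler_wpM2l; first by rewrite invr_ge0 ler0n.
apply: ler_sum => s _; rewrite kc_fk; last by rewrite (leq_ltn_trans _ hQ) // -ltnS.
apply: ler_wpM2l; first exact: Hweak_ge0.
rewrite /Sm mulr_sumr kc_sum; apply: ler_sum => a _.
by rewrite mulrCA -exprS kc_cstM.
Qed.

Lemma P_bound M k : kc Q (P M.+1 k.+1) <= M.+1%:R^-1 * kc Q (P 1 k.+1).
Proof.
rewrite !P_recl -kc_cstM mulrA.
apply: lep_kc; apply: lepM.
- by apply: nn_iv; rewrite ler0n.
- exact: nnP.
- by apply: lep_iv1; rewrite ler1n.
apply: lep_prod => [j|j]; first by apply: nn_iv; rewrite ler0n.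
by apply: lep_iv; rewrite ?ltr0n ?ler_nat ?leq_add2r // !addSn.
Qed.

Lemma kc_ivX_ge0 i r k : 0 <= r -> 0 <= kc i (iv r ^+ k).
Proof. by move=> hr; apply: nnX; apply: nn_iv. Qed.

End PS.

Section RealPart.
Variable R : realType.

Lemma mono_cvg (u : nat -> R) B : (forall n, u n <= u n.+1) -> (forall n, u n <= B) ->
  [/\ cvgn u, limn u <= B & forall n, u n <= limn u].
Proof.
move=> h1 h2.
have nd : {homo u : n m / (n <= m)%N >-> n <= m} by apply/nondecreasing_seqP.
have cv : cvgn u by apply: nondecreasing_is_cvgn => //; exists B => _ [n _ <-].
split => //; last exact: nondecreasing_cvgn_le.
by apply: limr_le => //; apply: nearW.
Qed.

Lemma cvg_near [u : nat -> R] [e : R] : 0 < e -> cvgn u ->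
  exists N, forall k, (N <= k)%N -> `|limn u - u k| < e.
Proof.
move=> e0 /cvg_ex [L HL]; have HL' := HL; move/cvgrPdist_lt: HL => /(_ e e0) [N _ HN].
exists N => k hk; rewrite (cvg_lim _ HL') //; exact: HN.
Qed.

Lemma small_inv (x : R) [e : R] : 0 < e -> exists M : nat, x / M.+1%:R < e.
Proof.
move=> e0; have hb := archi_boundP (normr_ge0 (x / e)).
exists (Num.Def.archi_bound (`|x / e|)).
have hM : 0 < (Num.Def.archi_bound `|x / e|).+1%:R :> R by rewrite ltr0n.
rewrite ltr_pdivrMr //.
apply: le_lt_trans (ler_norm x) _.
have : `|x / e| < (Num.Def.archi_bound `|x / e|).+1%:R.
  by apply: lt_le_trans hb _; rewrite ler_nat.
rewrite normrM normfV (gtr0_norm e0) ltr_pdivrMr // => H.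
by rewrite mulrC.
Qed.

Lemma dir1 (t z : nat -> R) (U rho : nat -> nat -> R) (Zl : R) :
 (forall M j, \sum_(i < M) U i j + rho M j = t j) ->
 (forall M j, rho M j <= t j / M.+1%:R) ->
 (forall i K, \sum_(j < K) U i j <= z i) ->
 (forall M, \sum_(i < M) z i <= Zl) ->
 forall N, \sum_(j < N) t j <= Zl.
Proof.
move=> hA hrho hB hZ N; set L := \sum_(j < N) t j.
have key : forall M, L <= Zl + L / M.+1%:R.
  move=> M; rewrite /L.
  have E : \sum_(j < N) t j = \sum_(j < N) \sum_(i < M) U i j + \sum_(j < N) rho M j.
    by rewrite -big_split; apply: eq_bigr => j _; rewrite /= hA.
  rewrite {1}E.
  apply: lerD.
    rewrite exchange_big /=; apply: le_trans (hZ M); apply: ler_sum => i _; exact: hB.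
  by rewrite mulr_suml; apply: ler_sum => j _; exact: hrho.
apply/ler_addgt0Pr => e e0.
have [M HM] := small_inv L e0.
by apply: le_trans (key M) _; rewrite lerD2l ltW.
Qed.

Lemma dir2 (t z : nat -> R) (U sig : nat -> nat -> R) (Ll : R) (Tb : nat -> R) :
 (forall M j, \sum_(i < M) U i j <= t j) ->
 (forall i K, \sum_(j < K) U i j + sig i K = z i) ->
 (forall i K, sig i K <= Tb K) ->
 (forall K, \sum_(j < K) t j <= Ll) ->
 (forall e, 0 < e -> exists K, Tb K <= e) ->
 forall M, \sum_(i < M) z i <= Ll.
Proof.
move=> hA hB hsig hL hT M; apply/ler_addgt0Pr => e e0.
have eM : 0 < e / M.+1%:R by rewrite divr_gt0 // ltr0n.
have [K HK] := hT _ eM.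
have -> : \sum_(i < M) z i = \sum_(i < M) \sum_(j < K) U i j + \sum_(i < M) sig i K.
  by rewrite -big_split; apply: eq_bigr => i _; rewrite /= hB.
apply: lerD.
  rewrite exchange_big /=; apply: le_trans (hL K); apply: ler_sum => j _; exact: hA.
apply: le_trans (_ : \sum_(i < M) (e / M.+1%:R) <= e).
  by apply: ler_sum => i _; exact: le_trans (hsig i K) HK.
rewrite sumr_const card_ord.
apply: le_trans (_ : e / M.+1%:R *+ M.+1 <= e).
  by rewrite (mulrS (e / M.+1%:R)) lerDr ltW.
by rewrite -mulr_natr divfK // pnatr_eq0.
Qed.

Lemma tail (a F : nat -> R) :
 (forall k, 0 <= a k) -> (forall k, F k <= F k.+1) -> (forall k, 0 <= F k) ->
 (forall k, F k / (k.+1%:R ^+ 2) <= a k) -> cvgn (fun N => \sum_(k < N) a k) ->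
 forall e, 0 < e -> exists K, F K / K.+1%:R <= e.
Proof.
move=> a0 Fnd F0 ha cv e e0.
have Fh : {homo F : x y / (x <= y)%N >-> x <= y} by apply/nondecreasing_seqP.
set S := fun N => \sum_(k < N) a k.
have Snd : forall N, S N <= S N.+1 by move=> N; rewrite /S big_ord_recr /= lerDl.
have Sh : {homo S : x y / (x <= y)%N >-> x <= y} by apply/nondecreasing_seqP.
have Sle := nondecreasing_cvgn_le Sh cv.
have e4 : 0 < e / 4 by rewrite divr_gt0.
have [K HK] := cvg_near e4 cv.
exists K.
have h1 : S (K + K).+2 - S K <= e / 4.
  have := HK K (leqnn K); rewrite ltr_norml => /andP [_ H].
  apply: le_trans (_ : limn S - S K <= _); last by rewrite ltW.
  by rewrite lerD2r; apply: Sle.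
have h2 : S (K + K).+2 - S K = \sum_(K <= k < (K + K).+2) a k.
  have hK2 : (K <= (K + K).+2)%N by rewrite -!addnS leq_addr.
  rewrite /S -!(big_mkord xpredT) (big_cat_nat (leq0n K) hK2) /=.
  by rewrite addrAC subrr add0r.
have h3 : \sum_(K <= k < (K + K).+2) (F K / ((K + K).+2%:R ^+ 2)) <= \sum_(K <= k < (K + K).+2) a k.
  rewrite big_nat_cond [X in _ <= X]big_nat_cond; apply: ler_sum => k /andP [/andP [hk1 hk2] _].
  apply: le_trans (ha k); apply: ler_pM; rewrite ?invr_ge0 ?exprn_ge0 ?ler0n //.
    exact: Fh.
  rewrite lef_pV2 ?posrE ?exprn_gt0 ?ltr0n //.
  by rewrite lerXn2r ?nnegrE ?ler0n // ler_nat.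
rewrite sumr_const_nat in h3.
have hsub : ((K + K).+2 - K)%N = K.+2 by rewrite -!addnS addKn.
rewrite hsub in h3.
have c0 : 0 < K.+1%:R :> R by rewrite ltr0n.
have h3' : (F K / ((K + K).+2%:R ^+ 2)) * K.+2%:R <= \sum_(K <= k < (K + K).+2) a k.
  by rewrite mulr_natr.
have ee : F K / K.+1%:R <= 4 * ((F K / ((K + K).+2%:R ^+ 2)) * K.+2%:R).
  have -> : ((K + K).+2%:R : R) = 2 * K.+1%:R by rewrite -natrM mul2n -addnn addnS addSn.
  have -> : (K.+2%:R : R) = K.+1%:R + 1 by rewrite -natr1.
  have -> : 4 * (F K / (2 * K.+1%:R) ^+ 2 * (K.+1%:R + 1)) = F K / K.+1%:R + F K / (K.+1%:R ^+ 2).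
    by field; rewrite gt_eqF.
  by rewrite lerDl divr_ge0 ?exprn_ge0 // ltW.
apply: le_trans ee _.
rewrite -ler_pdivlMl // [4^-1 * e]mulrC; apply: le_trans h3' _; rewrite -h2; exact: h1.
Qed.

End RealPart.
Arguments mono_cvg {R}.
Arguments cvg_near {R}.
Arguments small_inv {R}.
Arguments dir1 {R}.
Arguments dir2 {R}.
Arguments tail {R}.

Section Final.
Variable R : realType.

Definition Zp (w N : nat) : R := \sum_(1 <= k < N) 1 / ((k%:R : R) ^+ w).

Lemma Zp_ord w N : Zp w N.+1 = \sum_(i < N) 1 / (i.+1%:R ^+ w).
Proof. by rewrite /Zp big_add1 /= big_mkord. Qed.

Lemma Zp0 w : Zp w 0 = 0.
Proof. by rewrite /Zp big_geq. Qed.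

Lemma Zp_nd w N : Zp w N <= Zp w N.+1.
Proof.
case: N => [|N]; first by rewrite Zp0 Zp_ord big_ord0.
by rewrite !Zp_ord big_ord_recr /= lerDl divr_ge0 ?exprn_ge0 ?ler0n.
Qed.

Lemma Zp_bound w : (2 <= w)%N -> forall N, Zp w N <= 2.
Proof.
move=> hw.
have key : forall N, Zp w N.+1 <= 2 - 2 / N.+1%:R.
  elim=> [|N ih]; first by rewrite Zp_ord big_ord0 divr1 subrr.
  rewrite Zp_ord big_ord_recr /= -Zp_ord.
  set x : R := N.+1%:R in ih *.
  have x1 : 1 <= x by rewrite ler1n.
  have x0 : 0 < x by rewrite ltr0n.
  have -> : (N.+2%:R : R) = x + 1 by rewrite /x -natr1.
  clearbody x.
  have h1 : 1 / x ^+ w <= 1 / x ^+ 2.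
    rewrite ler_pdivrMr ?exprn_gt0 // mulrC mulrA mulr1 ler_pdivlMr ?exprn_gt0 // mul1r.
    exact: ler_weXn2l.
  have h2 : 1 / x ^+ 2 <= 2 / x - 2 / (x + 1).
    have -> : 2 / x - 2 / (x + 1) = 1 / x ^+ 2 + (x - 1) / (x ^+ 2 * (x + 1)).
      by field; rewrite !gt_eqF // addr_gt0.
    by rewrite lerDl divr_ge0 ?subr_ge0 // mulr_ge0 ?exprn_ge0 ?addr_ge0 // ltW.
  have : Zp w N.+1 + 1 / x ^+ w <= 2 - 2 / x + (2 / x - 2 / (x + 1)).
    by apply: lerD => //; apply: le_trans h1 h2.
  by rewrite addrA subrK.
case=> [|N]; first by rewrite Zp0.
apply: le_trans (key N) _; rewrite gerBl divr_ge0 // ler0n.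
Qed.

Lemma Zp_cvg w : (2 <= w)%N -> cvgn (Zp w) /\ forall N, Zp w N <= zeta R w.
Proof.
move=> hw; have [h1 _ h3] := mono_cvg _ _ (Zp_nd w) (Zp_bound w hw); split => //.
Qed.

End Final.

Section Main.
Variable R : realType.

Lemma Gp_ord p q N : Gpartial R 0 p q N.+1 = \sum_(j < N) Gterm R 0 p q j.+1.
Proof. by rewrite /Gpartial big_add1 /= big_mkord. Qed.

Lemma Gp0 p q : Gpartial R 0 p q 0 = 0.
Proof. by rewrite /Gpartial big_geq. Qed.

Lemma Gterm_ge0 p q k : 0 <= Gterm R 0 p q k.
Proof.
rewrite /Gterm; apply: divr_ge0; last by rewrite exprn_ge0 ?ler0n.
by apply: mulr_ge0; [exact: Estr_ge0 | exact: Hweak_ge0].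
Qed.

Lemma Gp_nd p q N : Gpartial R 0 p q N <= Gpartial R 0 p q N.+1.
Proof.
case: N => [|N]; first by rewrite Gp0 Gp_ord big_ord0.
by rewrite !Gp_ord big_ord_recr /= lerDl Gterm_ge0.
Qed.

Lemma Hweak_nd s K : Hweak R s K <= Hweak R s K.+1.
Proof.
case: s => [|s] //=; rewrite [X in _ <= X]big_nat_recr //= lerDl.
by apply: divr_ge0; [exact: Hweak_ge0 | rewrite ler0n].
Qed.

Lemma Estr_nd a K : Estr R a K <= Estr R a K.+1.
Proof.
case: a => [|a] //=; rewrite [X in _ <= X]big_nat_recr //= lerDl.
by apply: divr_ge0; [exact: Estr_ge0 | rewrite ler0n].
Qed.

Definition Cst (p q : nat) : R := ('C((p + q + 1)%N, q))%:R.

Lemma Cst_gt0 p q : 0 < Cst p q.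
Proof. by rewrite /Cst ltr0n bin_gt0 addnAC leq_addl. Qed.

Lemma zeta_facts p q : cvgn (Zp R (p + q + 2)%N) /\ forall N, Zp R (p + q + 2)%N N <= zeta R (p + q + 2)%N.
Proof. by apply: Zp_cvg; rewrite addn2 ltnS ltnS leq0n. Qed.

Lemma Gbound p q N : Gpartial R 0 p q N <= Cst p q * zeta R (p + q + 2)%N.
Proof.
have [_ hz] := zeta_facts p q.
case: N => [|N].
  by rewrite Gp0 mulr_ge0 ?(ltW (Cst_gt0 _ _)) // (le_trans _ (hz 0%N)) // Zp0.
rewrite Gp_ord.
apply: (dir1 (fun j => Gterm R 0 p q j.+1) (fun i => Cst p q / (i.+1%:R ^+ (p + q + 2)%N))
  (fun i j => Estr R p j * j`!%:R * kc R q q (P R q i.+1 j.+2))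
  (fun M j => Estr R p j * j`!%:R / j.+1%:R * kc R q q (P R q M.+1 j.+1))).
- by move=> M j; exact: FA.
- move=> M j /=.
  have e0 := FA R q p 0 j; rewrite big_ord0 add0r in e0.
  rewrite -e0 -[X in _ <= X]mulrA; apply: ler_wpM2l.
    by apply: mulr_ge0; [apply: mulr_ge0; [exact: Estr_ge0 | rewrite ler0n] | rewrite invr_ge0 ler0n].
  by rewrite mulrC; exact: P_bound.
- move=> i K; rewrite -(FB R q p i K) lerDl; exact: kc_rem_ge0.
- move=> M; have -> : \sum_(i < M) Cst p q / i.+1%:R ^+ (p + q + 2)%N = Cst p q * Zp R (p + q + 2)%N M.+1.
    by rewrite Zp_ord mulr_sumr; apply: eq_bigr => i _; rewrite mul1r.
  by apply: ler_wpM2l; [exact: ltW (Cst_gt0 _ _) | exact: hz].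
Qed.

Lemma Gcvg p q : [/\ cvgn (Gpartial R 0 p q), G R 0 p q <= Cst p q * zeta R (p + q + 2)%N
  & forall N, Gpartial R 0 p q N <= G R 0 p q].
Proof. exact: mono_cvg _ _ (Gp_nd p q) (Gbound p q). Qed.

Definition gam p q (a s : nat) : R := kc R q (q - s) (iv R q 1%:R ^+ (p - a).+2).

Lemma gam_ge0 p q a s : 0 <= gam p q a s.
Proof. by apply: kc_ivX_ge0; rewrite ler0n. Qed.

Definition Fq p q K : R := \sum_(s < q.+1) (Hweak R s K *
     \sum_(a < p.+1) (Estr R a K * gam p q a s)).

Lemma tailpq p q e : 0 < e -> exists K, Fq p q K / K.+1%:R <= e.
Proof.
move=> e0.
pose a k := \sum_(s < q.+1) \sum_(a < p.+1) gam p q a s * Gterm R 0 a s k.+1.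
have a0 : forall k, 0 <= a k.
  by move=> k; do 2!(apply: sumr_ge0 => ? _); apply: mulr_ge0; [exact: gam_ge0 | exact: Gterm_ge0].
apply: (tail a (Fq p q)) => //.
- move=> K; apply: ler_sum => s _; apply: ler_pM.
  + exact: Hweak_ge0.
  + by apply: sumr_ge0 => i _; apply: mulr_ge0; [exact: Estr_ge0 | exact: gam_ge0].
  + exact: Hweak_nd.
  apply: ler_sum => i _; apply: ler_wpM2r; [exact: gam_ge0 | exact: Estr_nd].
- move=> K; apply: sumr_ge0 => s _; apply: mulr_ge0; first exact: Hweak_ge0.
  by apply: sumr_ge0 => i _; apply: mulr_ge0; [exact: Estr_ge0 | exact: gam_ge0].
- move=> K; rewrite /Fq mulr_suml; apply: ler_sum => s _.
  rewrite mulr_sumr mulr_suml; apply: ler_sum => i _.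
  rewrite /Gterm add0n /=.
  have -> : Hweak R s K * (Estr R i K * gam p q i s) / K.+1%:R ^+ 2 =
     (gam p q i s * Estr R i K / K.+1%:R ^+ 2) * Hweak R s K by ring.
  have -> : gam p q i s * (Estr R i K * Hweak R s K.+1 / K.+1%:R ^+ 2) =
     (gam p q i s * Estr R i K / K.+1%:R ^+ 2) * Hweak R s K.+1 by ring.
  apply: ler_wpM2l; last exact: Hweak_nd.
  apply: divr_ge0; last by rewrite exprn_ge0 ?ler0n.
  by apply: mulr_ge0; [exact: gam_ge0 | exact: Estr_ge0].
- pose B := \sum_(s < q.+1) \sum_(i < p.+1) gam p q i s * (Cst i s * zeta R (i + s + 2)%N).
  have nd : forall N, \sum_(k < N) a k <= \sum_(k < N.+1) a k.
    by move=> N; rewrite big_ord_recr /= lerDl.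
  suff hb : forall N, \sum_(k < N) a k <= B.
    by have [h1 _ _] := mono_cvg (fun N => \sum_(k < N) a k) B nd hb.
  move=> N; rewrite /a exchange_big /=; apply: ler_sum => s _.
  rewrite exchange_big /=; apply: ler_sum => i _.
  rewrite -mulr_sumr; apply: ler_wpM2l; first exact: gam_ge0.
  rewrite -Gp_ord; exact: Gbound.
Qed.

Lemma mainG p q : G R 0 p q = Cst p q * zeta R (p + q + 2)%N.
Proof.
have [cvG GleZ Gge] := Gcvg p q.
have [cvz hz] := zeta_facts p q.
apply/eqP; rewrite eq_le GleZ /=.
have hd2 := dir2 (fun j => Gterm R 0 p q j.+1) (fun i => Cst p q / (i.+1%:R ^+ (p + q + 2)%N))
  (fun i j => Estr R p j * j`!%:R * kc R q q (P R q i.+1 j.+2))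
  (fun i K => kc R q q (rem R q i.+1 p K)) (G R 0 p q)
  (fun K => K.+1%:R^-1 * Fq p q K).
have {}hd2 : forall M, \sum_(i < M) Cst p q / (i.+1%:R ^+ (p + q + 2)%N) <= G R 0 p q.
  apply: hd2.
  - move=> M j; rewrite -(FA R q p M j) lerDl.
    apply: mulr_ge0; last exact: kc_P_ge0.
    by apply: mulr_ge0; [apply: mulr_ge0; [exact: Estr_ge0 | rewrite ler0n] | rewrite invr_ge0 ler0n].
  - by move=> i K; exact: FB.
  - by move=> i K; exact: (Fsig R q i.+1 p K (ltn0Sn i)).
  - by move=> K; rewrite -Gp_ord; exact: Gge.
  - by move=> e e0; have [K HK] := tailpq p q e e0; exists K; rewrite mulrC.
have G0 : 0 <= G R 0 p q by apply: le_trans (Gge 0%N); rewrite Gp0.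
have C0 := Cst_gt0 p q.
rewrite mulrC -ler_pdivlMr //.
apply: limr_le => //; apply: nearW => N.
change (Zp R (p + q + 2)%N N <= G R 0 p q / Cst p q).
case: N => [|N]; first by rewrite Zp0 divr_ge0 // ltW.
rewrite ler_pdivlMr // Zp_ord mulr_suml.
apply: le_trans (hd2 N); apply: ler_sum => i _; rewrite mul1r mulrC //.
Qed.

End Main.

Theorem proposition2p5 (R : realType) (p q : nat) :
  cvgn (Gpartial R 0 p q) /\
  G R 0 p q = ('C(p + q + 1, q))%:R * zeta R (p + q + 2) /\
  ((0 < q)%N -> G R 0 p q = G R 0 q.-1 p.+1).
Proof.
have [cvG _ _] := Gcvg R p q.
split => //; split; first exact: mainG.
clear cvG; case: q => [|q] // _.
rewrite !mainG /Cst /=.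
have -> : (q + p.+1 + 2)%N = (p + q.+1 + 2)%N by lia.
have -> : (q + p.+1 + 1)%N = (p + q.+1 + 1)%N by lia.
congr (_%:R * _); rewrite -bin_sub; last by lia.
congr 'C(_, _); lia.
Qed.
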